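(* Let $m,d$ be natural numbers with $d\geqslant m+1$ and $c,C$ positive constants. For a natural number $N$, let $L=L(N):\mathbb{R}^d\to\mathbb{R}^m$ be a surjective linear map with matrix $(\lambda_{ij})_{i\leqslant m,j\leqslant d}$, and assume $\Vert L\Vert_\infty\leqslant C$ and $\operatorname{dist}(L,V_{\mathrm{rank}}(m,d))\geqslant c$. Then there exists an $m\times m$ submatrix $M$ of $L$ with (1) $|\det M|=\Omega_{c,C}(1)$ and (2) $\Vert M^{-1}\Vert_\infty=O_{c,C}(1)$ (such $M$ is called a rank matrix of $L$). Furthermore: (3) if $\mathbf v\in\mathbb{R}^d$ is such that $\mathbf v^T$ lies in the row space of $L$ and $\Vert\mathbf v\Vert_\infty\leqslant C_1$ for some constant $C_1>0$, then there exist coefficients $a_1,\dots,a_m$ with $|a_i|=O_{c,C,C_1}(1)$ such that $\sum_{i=1}^m a_i\lambda_{ij}=v_j$ for all $1\leqslant j\leqslant d$; and (4) if $L$ satisfies the stronger hypothesis $\operatorname{dist}(L,V^{\mathrm{gbl}}_{\mathrm{rank}}(m,d))\geqslant c$, then for each $j$ there is a rank matrix of $L$ not containing the $j$-th column of $L$.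
   Context: $\Vert\cdot\Vert_\infty$ is the maximum absolute value of matrix entries; $\operatorname{dist}$ is the $\ell^\infty$ distance on entries. $V_{\mathrm{rank}}(m,d)$ is the set of $m\times d$ real matrices of rank $<m$. $V^{\mathrm{gbl}}_{\mathrm{rank}}(m,d)$ is the set of linear maps $L:\mathbb{R}^d\to\mathbb{R}^m$ for which there is a standard basis vector $\mathbf e_i$ such that $L$ restricted to $\mathrm{span}(\mathbf e_j:j\neq i)$ has rank $<m$. $O_{c,C}(1)$ (resp. $\Omega_{c,C}(1)$) denotes a quantity bounded above (resp. below by a positive quantity) by a constant depending only on $c,C,m,d$; in (3) the constant may also depend on $C_1$. *)

(* Defs.v *)
From HB Require Import structures.
From mathcomp Require Import all_boot all_order all_algebra.
From mathcomp Require Import reals.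
Set Implicit Arguments. Unset Strict Implicit. Unset Printing Implicit Defensive.
Import Order.TTheory GRing.Theory Num.Theory.
Local Open Scope ring_scope.

Definition mxnorm_inf (R : realType) (p q : nat) (A : 'M[R]_(p, q)) : R :=
  \big[Num.max/0]_(i < p) \big[Num.max/0]_(j < q) `|A i j|.

Definition V_rank (R : realType) (m d : nat) (A : 'M[R]_(m, d)) : Prop :=
  (\rank A < m)%N.

(* The matrix of L restricted to span(e_k : k <> i) (column i replaced by 0);
   its rank is the rank of that restriction. *)
Definition drop_col (R : realType) (m d : nat) (i : 'I_d) (A : 'M[R]_(m, d))
  : 'M[R]_(m, d) := \matrix_(r < m, k < d) (if k == i then 0 else A r k).

Definition V_rank_gbl (R : realType) (m d : nat) (A : 'M[R]_(m, d)) : Prop :=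
  exists i : 'I_d, (\rank (drop_col i A) < m)%N.

(* dist(L, V) >= c, with dist the l^oo distance on entries:
   inf_{A in V} ||L - A||_oo >= c, i.e. every A in V is at distance >= c. *)
Definition dist_ge (R : realType) (m d : nat) (V : 'M[R]_(m, d) -> Prop)
  (L : 'M[R]_(m, d)) (c : R) : Prop :=
  forall A, V A -> c <= mxnorm_inf (L - A).

Definition rank_matrix (R : realType) (m d : nat) (L : 'M[R]_(m, d))
  (K1 K2 : R) (f : 'I_m -> 'I_d) : Prop :=
  injective f /\ K1 <= `|\det (colsub f L)| /\
  mxnorm_inf (invmx (colsub f L)) <= K2.

(* Main.v *)
Require Import Defs.
From HB Require Import structures.
From mathcomp Require Import all_boot all_order all_algebra.
From mathcomp Require Import reals.
From mathcomp Require Import ring lra.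
From mathcomp Require Import fingroup perm.
Import Order.TTheory GRing.Theory Num.Theory.
Local Open Scope ring_scope.

Section Aux.
Variable R : realType.
Local Notation nx := (@mxnorm_inf R _ _).

Lemma nx_ge0 p q (A : 'M[R]_(p,q)) : 0 <= nx A.
Proof.
rewrite /mxnorm_inf; apply: (big_ind (fun x => 0 <= x)) => //.
  by move=> x y hx hy; rewrite le_max hx.
move=> i _; apply: (big_ind (fun x => 0 <= x)) => //.
  by move=> x y hx hy; rewrite le_max hx.
Qed.

Lemma nx_entry p q (A : 'M[R]_(p,q)) i j : `|A i j| <= nx A.
Proof.
rewrite /mxnorm_inf; apply: le_trans (le_bigmax _ _ i).
exact: (le_bigmax _ (fun k => `|A i k|) j).
Qed.

Lemma nx_le p q (A : 'M[R]_(p,q)) K : 0 <= K -> (forall i j, `|A i j| <= K) -> nx A <= K.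
Proof.
move=> K0 h; apply: bigmax_le => // i _; apply: bigmax_le => // j _; exact: h.
Qed.

Lemma nx_mono p q (A B : 'M[R]_(p,q)) : (forall i j, `|A i j| <= `|B i j|) -> nx A <= nx B.
Proof.
move=> h; apply: nx_le; first exact: nx_ge0.
by move=> i j; apply: le_trans (h i j) _; apply: nx_entry.
Qed.

Lemma det_bound n (A : 'M[R]_n) K : 0 <= K -> (forall i j, `|A i j| <= K) ->
  `|\det A| <= #|{perm 'I_n}|%:R * K ^+ n.
Proof.
move=> K0 h; rewrite /determinant; apply: le_trans (ler_norm_sum _ _ _) _.
rewrite mulr_natl -sumr_const; apply: ler_sum => s _.
rewrite normrM normrX normrN1 expr1n mul1r normr_prod.
apply: le_trans (_ : _ <= \prod_(i < n) K) _; last by rewrite prodr_const card_ord.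
by apply: ler_prod => i _; rewrite normr_ge0 h.
Qed.

Lemma sum_eqr n (F : 'I_n -> R) j : \sum_c ((c == j)%:R * F c) = F j.
Proof.
rewrite (bigD1 j) //= eqxx mul1r big1 ?addr0 // => c /negbTE ->; by rewrite mul0r.
Qed.

Lemma delta_mulE m n p (X : 'M[R]_(n,p)) (i : 'I_m) j a b :
  (delta_mx i j *m X) a b = (a == i)%:R * X j b.
Proof.
rewrite !mxE (bigD1 j) //= big1 ?addr0; first by rewrite mxE eqxx andbT.
by move=> c /negbTE hc; rewrite mxE hc andbF mul0r.
Qed.


Lemma mul_deltaE m n p (X : 'M[R]_(m,n)) (i : 'I_n) (j : 'I_p) a b :
  (X *m delta_mx i j) a b = X a i * (b == j)%:R.
Proof.
rewrite !mxE (bigD1 i) //= big1 ?addr0; first by rewrite mxE eqxx.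
by move=> c /negbTE hc; rewrite mxE hc mulr0.
Qed.

Lemma core m d (L : 'M[R]_(m,d)) (c : R) : 0 < c -> dist_ge (@V_rank R m d) L c ->
  exists f : 'I_m -> 'I_d,
   [/\ injective f, colsub f L \in unitmx & nx (invmx (colsub f L)) <= c^-1].
Proof.
move=> hc hd.
have rkL : \rank L = m.
  apply/eqP; rewrite eqn_leq rank_leq_row /= leqNgt; apply/negP => h.
  have := hd L h; rewrite subrr.
  have h0 : nx (0 : 'M_(m,d)) <= 0 by apply: nx_le => // i j; rewrite mxE normr0.
  by move=> h1; have := le_trans h1 h0; rewrite leNgt hc.
have [g0 ug0] : exists g : {ffun 'I_m -> 'I_d}, colsub g L \in unitmx.
  have rkT : \rank L^T = m by rewrite mxrank_tr.
  have := maxrowsub_free L^T; move: (maxrankfun L^T).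
  rewrite rkT => g hg; exists g.
  have -> : colsub g L = (rowsub g L^T)^T by apply/matrixP => a b; rewrite !mxE.
  by rewrite unitmx_tr -row_free_unit.
pose F := fun g : {ffun 'I_m -> 'I_d} => `|\det (colsub g L)|.
case: (@arg_maxP _ _ _ g0 predT F isT) => f _ fmax.
have detf : \det (colsub f L) != 0.
  have := fmax g0 isT; rewrite /F.
  have h1 : 0 < `|\det (colsub g0 L)| by rewrite normr_gt0 -unitfE -unitmxE.
  move=> h2; rewrite -normr_gt0; exact: lt_le_trans h1 h2.
set M := colsub f L.
have uM : M \in unitmx by rewrite unitmxE unitfE.
have Bb : forall j k, `|(invmx M *m L) j k| <= 1.
  move=> j k; pose g := [ffun x => if x == j then k else f x].
  have e1 : (invmx M *m L) j k = (\det M)^-1 * \det (colsub g L).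
    rewrite /invmx uM -scalemxAl mxE; congr (_ * _).
    rewrite (expand_det_col _ j) mxE; apply: eq_bigr => i _.
    rewrite !mxE ffunE eqxx mulrC; congr (_ * _).
    rewrite /cofactor; congr (_ * \det _); apply/matrixP => a b; rewrite !mxE ffunE.
    have -> : (lift j b == j) = false by apply/negbTE; rewrite eq_sym neq_lift.
    by [].
  rewrite e1 normrM normrV ?unitfE // mulrC ler_pdivrMr ?normr_gt0 // mul1r.
  exact: (fmax g isT).
exists f; split => //.
  move=> a b eab; apply/eqP; apply: contraT => nab; move: detf.
  rewrite -det_tr (determinant_alternate nab) ?eqxx // => x; by rewrite !mxE eab.
apply: nx_le; first by rewrite invr_ge0 ltW.
move=> j i; rewrite leNgt; apply/negP => hx.
set x := invmx M j i.
have cx : 0 < c^-1 by rewrite invr_gt0.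
have xpos : 0 < `|x| by apply: lt_trans hx.
have x0 : x != 0 by rewrite -normr_gt0.
pose t := x^-1.
pose P := (1%:M - t *: (delta_mx i j *m invmx M)) : 'M[R]_m.
have hA : V_rank (P *m L).
  rewrite /V_rank; apply: leq_ltn_trans (mxrankM_maxl _ _) _.
  rewrite ltnNge; apply/negP => hP.
  have uP : P \in unitmx by rewrite -row_free_unit /row_free eqn_leq rank_leq_row hP.
  pose w := row j (invmx M).
  have e2 : w *m delta_mx i j *m invmx M = x *: w.
    apply/rowP => b; rewrite !mxE (bigD1 j) //= big1 ?addr0.
      by rewrite mul_deltaE eqxx mulr1 !mxE.
    by move=> a /negbTE ha; rewrite mul_deltaE ha mulr0 mul0r.
  have w0 : w *m P = 0.
    rewrite /P mulmxBr mulmx1 -scalemxAr mulmxA e2 scalerA mulVf // scale1r.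
    by rewrite subrr.
  have : w = 0 by rewrite -(mulmxK uP w) w0 mul0mx.
  by move/rowP/(_ i); rewrite !mxE => h; move: x0; rewrite /x h eqxx.
have := hd _ hA.
have -> : L - P *m L = t *: (delta_mx i j *m (invmx M *m L)).
  by rewrite mulmxBl mul1mx opprB addrC subrK -scalemxAl mulmxA.
move=> hcn.
have ht : nx (t *: (delta_mx i j *m (invmx M *m L))) <= `|t|.
  apply: nx_le => // a k; rewrite mxE delta_mulE normrM.
  apply: le_trans (_ : _ <= `|t| * 1) _; last by rewrite mulr1.
  apply: ler_wpM2l => //; case: (a == i); rewrite ?normr1 ?normr0 ?mul1r ?mul0r ?Bb //.
  by rewrite ?mulr0n normr0 ler01.
have h1 := le_trans hcn ht.
rewrite /t normrV ?unitfE // in h1.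
have h3 : c * `|x| <= 1.
  by have := ler_wpM2r (ltW xpos) h1; rewrite mulVf // gt_eqF.
have h4 : 1 < c * `|x|.
  by rewrite -[1](mulfV (lt0r_neq0 hc)) (ltr_pM2l hc).
by have := lt_le_trans h4 h3; rewrite ltxx.
Qed.


Lemma rank_ok n (M : 'M[R]_n) (c : R) : 0 < c -> M \in unitmx -> nx (invmx M) <= c^-1 ->
  c ^+ n / #|{perm 'I_n}|%:R <= `|\det M|.
Proof.
move=> hc uM hb.
have Npos : 0 < #|{perm 'I_n}|%:R :> R.
  by rewrite ltr0n; apply/card_gt0P; exists 1%g.
have hD := @det_bound n (invmx M) (c^-1) (ltW (ltac:(by rewrite invr_gt0) : 0 < c^-1))
  (fun i j => le_trans (nx_entry _ _ _ i j) hb).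
have e : `|\det M| * `|\det (invmx M)| = 1.
  by rewrite -normrM -det_mulmx mulmxV // det1 normr1.
rewrite ler_pdivrMr //.
set a := `|\det M| in e *; set D := `|\det (invmx M)| in e hD.
set N := #|{perm 'I_n}|%:R in Npos hD *.
have ycn : c^-1 ^+ n * c ^+ n = 1 by rewrite -exprMn mulVf ?expr1n // lt0r_neq0.
have a0 : 0 <= a by apply: normr_ge0.
have h1 : 1 <= a * (N * c^-1 ^+ n) by rewrite -e ler_wpM2l.
have := ler_wpM2r (ltW (exprn_gt0 n hc)) h1.
have -> : a * (N * c^-1 ^+ n) * c ^+ n = a * N * (c^-1 ^+ n * c ^+ n) by ring.
by rewrite ycn mulr1 mul1r.
Qed.

Lemma sum_eql n (F : 'I_n -> R) j : \sum_c (F c * (c == j)%:R) = F j.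
Proof.
rewrite (bigD1 j) //= eqxx mulr1 big1 ?addr0 // => c /negbTE ->; by rewrite mulr0.
Qed.

Lemma rank_drop m d (A : 'M[R]_(m,d)) j : (\rank (drop_col j A) <= \rank A)%N.
Proof.
pose Dm := \matrix_(a < d, b < d) (if b == j then 0 else (a == b)%:R) : 'M[R]_d.
have -> : drop_col j A = A *m Dm.
  apply/matrixP => r k; rewrite !mxE.
  case hk: (k == j).
    by rewrite big1 // => a _; rewrite mxE hk mulr0.
  rewrite -(@sum_eql _ (fun a => A r a) k); apply: eq_bigr => a _.
  by rewrite mxE hk eq_sym.
exact: mxrankM_maxl.
Qed.

End Aux.

Theorem proposition3p1 (R : realType) (m d : nat) (hmd : (m.+1 <= d)%N)
  (c C : R) (hc : 0 < c) (hC : 0 < C) :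
  exists K1 K2 : R, 0 < K1 /\ 0 < K2 /\
  (forall L : 'M[R]_(m, d),
     \rank L = m -> mxnorm_inf L <= C -> dist_ge (@V_rank R m d) L c ->
     (exists f : 'I_m -> 'I_d, rank_matrix L K1 K2 f) /\
     (dist_ge (@V_rank_gbl R m d) L c ->
        forall j : 'I_d, exists f : 'I_m -> 'I_d,
          rank_matrix L K1 K2 f /\ (forall k, f k != j))) /\
  (forall C1 : R, 0 < C1 -> exists K3 : R, 0 < K3 /\
     forall L : 'M[R]_(m, d),
       \rank L = m -> mxnorm_inf L <= C -> dist_ge (@V_rank R m d) L c ->
       forall v : 'rV[R]_d, (v <= L)%MS -> mxnorm_inf v <= C1 ->
       exists a : 'I_m -> R, (forall i, `|a i| <= K3) /\
         forall j : 'I_d, \sum_(i < m) a i * L i j = v 0 j).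
Proof.
have Npos : 0 < #|{perm 'I_m}|%:R :> R.
  by rewrite ltr0n; apply/card_gt0P; exists 1%g.
exists (c ^+ m / #|{perm 'I_m}|%:R), c^-1.
split; first by rewrite divr_gt0 // exprn_gt0.
split; first by rewrite invr_gt0.
split.
  move=> L rkL nL hd; split.
    have [f [fi fu fb]] := @core _ _ _ _ _ hc hd.
    by exists f; split => //; split; [exact: (@rank_ok _ _ _ _ hc fu fb) | exact: fb].
  move=> hg j.
  pose L' := drop_col j L.
  have hd' : dist_ge (@V_rank R m d) L' c.
    move=> A hA.
    pose A2 := \matrix_(r < m, k < d) (if k == j then L r k else A r k).
    have hA2 : V_rank_gbl A2.
      exists j.
      have -> : drop_col j A2 = drop_col j A.
        by apply/matrixP => r k; rewrite !mxE; case: (k == j).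
      exact: leq_ltn_trans (rank_drop _ _ _ _ _) hA.
    apply: le_trans (hg _ hA2) _; apply: nx_mono => r k; rewrite !mxE.
    by case: (k == j) => /=; rewrite ?subrr ?normr0 ?normr_ge0.
  have [f [fi fu fb]] := @core _ _ _ _ _ hc hd'.
  have fj : forall k, f k != j.
    move=> k; apply/negP => /eqP fkj.
    move: fu; rewrite unitmxE unitfE (expand_det_col _ k) big1 ?eqxx //.
    by move=> i _; rewrite !mxE fkj eqxx mul0r.
  have eM : colsub f L' = colsub f L.
    by apply/matrixP => a b; rewrite !mxE (negbTE (fj b)).
  exists f; split => //; rewrite /rank_matrix -eM; split => //; split.
    exact: (@rank_ok _ _ _ _ hc fu fb).
  exact: fb.
move=> C1 hC1; exists (m%:R * C1 * c^-1 + 1); split.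
  have h0 : 0 <= m%:R * C1 * c^-1.
    apply: mulr_ge0; [apply: mulr_ge0; [exact: ler0n | exact: ltW] | by rewrite invr_ge0 ltW].
  lra.
move=> L rkL nL hd v /submxP [D eD] nv.
have [f [fi fu fb]] := @core _ _ _ _ _ hc hd.
exists (fun i => D 0 i); split; last by move=> j; rewrite eD mxE.
move=> i.
have eD2 : D = colsub f v *m invmx (colsub f L).
  have -> : colsub f v = D *m colsub f L.
    by rewrite eD; apply/matrixP => a b; rewrite !mxE; apply: eq_bigr => k _; rewrite !mxE.
  by rewrite mulmxK.
rewrite eD2 mxE; apply: le_trans (ler_norm_sum _ _ _) _.
apply: le_trans (_ : _ <= \sum_(b < m) C1 * c^-1) _.
  apply: ler_sum => b _; rewrite normrM; apply: ler_pM => //.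
    rewrite mxE; exact: le_trans (nx_entry _ _ _ _ _ _) nv.
  exact: le_trans (nx_entry _ _ _ _ _ _) fb.
rewrite sumr_const card_ord.
have -> : C1 / c *+ m = m%:R * C1 / c by rewrite -mulr_natl mulrA.
have h0 : 0 <= 1 :> R by []. lra.
Qed.
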